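(* Let $\eta>0$ and let $\{\mathbf{x}_j\}_{j=1}^m\subseteq\mathcal{X}_d$ be a finite set of points with $\|\mathbf{x}_i-\mathbf{x}_j\|_2\ge\eta$ for all $i\ne j$. Then for each $j\in[m]$ there exists a unit vector $\mathbf{v}_j\in\mathbb{R}^{2d}$ such that $\mathbf{v}_j^\top\mathbf{x}_j=\sqrt2$ and $\mathbf{x}_j$ is the only point of $\{\mathbf{x}_i\}_{i=1}^m$ contained in $T_j:=\{\mathbf{x}\in\mathbb{R}^{2d}:|\mathbf{v}_j^\top\mathbf{x}-\sqrt2|<\frac{\eta^2}{2\sqrt2}\}$.
   Context: $\mathcal{X}_d=\mathbb{S}^{d-1}\times\mathbb{S}^{d-1}\subset\mathbb{R}^{2d}$. *)

(* Defs.v *)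
From mathcomp Require Import all_boot all_order all_algebra.
From mathcomp Require Import reals.
Set Implicit Arguments. Unset Strict Implicit. Unset Printing Implicit Defensive.
Import Order.TTheory GRing.Theory Num.Theory.
Local Open Scope ring_scope.

Definition dotv (R : realType) (n : nat) (u v : 'rV[R]_n) : R :=
  \sum_(i < n) u 0 i * v 0 i.

Definition norm2 (R : realType) (n : nat) (u : 'rV[R]_n) : R :=
  Num.sqrt (dotv u u).

Definition on_sphere (R : realType) (n : nat) (u : 'rV[R]_n) : Prop :=
  norm2 u = 1.

(* X_d = S^{d-1} x S^{d-1} inside R^{2d} = R^{d+d}: first d and last d
   coordinates are both unit vectors. *)
Definition in_Xd (R : realType) (d : nat) (x : 'rV[R]_(d + d)) : Prop :=
  on_sphere (lsubmx x) /\ on_sphere (rsubmx x).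

(* Main.v *)
Require Import Defs.
From mathcomp Require Import all_boot all_order all_algebra.
From mathcomp Require Import reals.
From mathcomp Require Import ring lra.
Import Order.TTheory GRing.Theory Num.Theory.
Local Open Scope ring_scope.

Set Implicit Arguments.
Section Aux.
Variables (R : realType) (n : nat).
Implicit Types u v w : 'rV[R]_n.

Lemma dotvC u v : dotv u v = dotv v u.
Proof. by apply: eq_bigr => i _; rewrite mulrC. Qed.

Lemma dotvBl u w v : dotv (u - w) v = dotv u v - dotv w v.
Proof. by rewrite /dotv -sumrB; apply: eq_bigr => i _; rewrite !mxE mulrBl. Qed.

Lemma dotvBr u w v : dotv v (u - w) = dotv v u - dotv v w.
Proof. by rewrite dotvC dotvBl dotvC [dotv w v]dotvC. Qed.

Lemma dotvZl a u v : dotv (a *: u) v = a * dotv u v.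
Proof. by rewrite /dotv mulr_sumr; apply: eq_bigr => i _; rewrite !mxE mulrA. Qed.

Lemma dotv_ge0 u : 0 <= dotv u u.
Proof. by apply: sumr_ge0 => i _; rewrite -expr2 sqr_ge0. Qed.

Lemma sphere_dot u : on_sphere u -> dotv u u = 1.
Proof.
rewrite /on_sphere /norm2 => H.
by rewrite -(sqr_sqrtr (dotv_ge0 u)) H expr1n.
Qed.
End Aux.

Lemma dotv_split (R : realType) (d : nat) (x y : 'rV[R]_(d + d)) :
  dotv x y = dotv (lsubmx x) (lsubmx y) + dotv (rsubmx x) (rsubmx y).
Proof.
rewrite /dotv big_split_ord; congr (_ + _); apply: eq_bigr => i _; by rewrite !mxE.
Qed.

Theorem lemma17 (R : realType) (d m : nat) (eta : R) (x : 'I_m -> 'rV[R]_(d + d)) :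
  0 < eta ->
  (forall j, in_Xd (x j)) ->
  (forall i j, i != j -> eta <= norm2 (x i - x j)) ->
  forall j : 'I_m, exists v : 'rV[R]_(d + d),
    [/\ norm2 v = 1,
        dotv v (x j) = Num.sqrt 2,
        `|dotv v (x j) - Num.sqrt 2| < eta ^+ 2 / (2 * Num.sqrt 2) &
        forall i : 'I_m,
          `|dotv v (x i) - Num.sqrt 2| < eta ^+ 2 / (2 * Num.sqrt 2) -> x i = x j].
Proof.
move=> eta0 HX Hsep j.
set s := Num.sqrt 2.
have s0 : 0 < s by rewrite sqrtr_gt0.
have sn0 : s != 0 by rewrite gt_eqF.
have ss : s * s = 2 by rewrite -expr2 sqr_sqrtr.
have xx : forall k, dotv (x k) (x k) = 2.
  move=> k; case: (HX k) => H1 H2.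
  by rewrite dotv_split !sphere_dot.
have vxj : dotv (s^-1 *: x j) (x j) = s.
  by rewrite dotvZl xx -ss; field.
have s2 : 0 < 2 * s by rewrite mulr_gt0.
exists (s^-1 *: x j); split.
- rewrite /norm2 dotvZl dotvC dotvZl xx.
  have -> : s^-1 * (s^-1 * 2) = 1 by rewrite -ss; field.
  exact: sqrtr1.
- exact: vxj.
- by rewrite vxj subrr normr0 divr_gt0 // exprn_gt0.
- move=> i; case: (eqVneq i j) => [-> //| nij] H; exfalso.
  have := Hsep i j nij; rewrite /norm2.
  set D := dotv (x i - x j) (x i - x j).
  have D0 : 0 <= D by apply: dotv_ge0.
  have DE : D = 4 - 2 * dotv (x j) (x i).
    rewrite /D dotvBl !dotvBr !xx [dotv (x i) (x j)]dotvC; ring.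
  move=> He.
  have He2 : eta * eta <= D.
    have : eta * eta <= Num.sqrt D * Num.sqrt D by apply: ler_pM => //; apply: ltW.
    by rewrite -[Num.sqrt D * _]expr2 sqr_sqrtr.
  move: H; rewrite dotvZl.
  set t := dotv (x j) (x i).
  rewrite ltr_norml => /andP [H1 _].
  rewrite -(ltr_pM2r s2) in H1.
  have k1 : (s^-1 * t - s) * (2 * s) = 2 * t - 4.
    have -> : (4 : R) = 2 * (s * s) by rewrite ss; ring.
    by field.
  have k2 : - (eta ^+ 2 / (2 * s)) * (2 * s) = - (eta * eta).
    by rewrite mulNr divfK ?gt_eqF // expr2.
  rewrite k1 k2 in H1.
  rewrite DE -/t in He2.
  move: He2 H1; clearbody t; set e := eta * eta; clearbody e => He2 H1.
  lra.
Qed.
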